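(* Let $f$ be a DNF with $k$ terms and let $y\in\{0,1\}^n$ satisfy $f_{>\tau}$ and not $f_{\le\tau}$ ($\tau=1000k$). Fix any permutation $\pi$ and let $z_0,z_1,\dots$ be the sweep process started at $y$. If $(z_i)_a=y_a$ for all $a\in P(y)$, $T$ is a term in $\mathcal{T}_f(z_i)$, and $j\in[n]$ satisfies $(z_i)_j\neq y_j$, then neither $x_j$ nor $\overline{x_j}$ appears in $T$.
   Context: Terms are sets of literals, a DNF is a set of terms; $g_{\le L}$ / $g_{>L}$ are the sub-DNFs of terms of length $\le L$ / $>L$. $\mathcal{T}_f(x)$ is the set of terms of $f$ satisfied by $x$. Protected set $P(y)$: for each term $T\in f$ not satisfied by $y$, take the literal of $T$ with smallest index $i\in[n]$ not satisfied by $y$; $P(y)$ is the set of these indices. Sweep process: given $y$ with $f(y)=1$ and a permutation $\pi$ listing $[n]$ as $\pi(0),\dots,\pi(n-1)$, $z_0=y$, and $z_{i+1}=z_i^{\oplus\pi(i)}$ if $f(z_i^{\oplus\pi(i)})=1$, else $z_{i+1}=z_i$ ($x^{\oplus j}$ is $x$ with bit $j$ flipped). *)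

(* Defs.v *)
From mathcomp Require Import all_boot all_fingroup.
Set Implicit Arguments. Unset Strict Implicit. Unset Printing Implicit Defensive.

Definition point (n : nat) := {ffun 'I_n -> bool}.
(* A literal (j, true) is x_j, (j, false) is the negated literal ~x_j. *)
Definition literal (n : nat) := ('I_n * bool)%type.
Definition term (n : nat) := {set literal n}.
Definition dnf (n : nat) := {set term n}.

Definition lit_sat n (x : point n) (l : literal n) : bool := x l.1 == l.2.
Definition term_sat n (x : point n) (T : term n) : bool :=
  [forall l in T, lit_sat x l].
Definition dnf_eval n (f : dnf n) (x : point n) : bool :=
  [exists T in f, term_sat x T].

Definition dnf_le n (g : dnf n) (L : nat) : dnf n := [set T in g | #|T| <= L].
Definition dnf_gt n (g : dnf n) (L : nat) : dnf n := [set T in g | L < #|T|].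

Definition sat_terms n (f : dnf n) (x : point n) : {set term n} :=
  [set T in f | term_sat x T].

Definition flip n (x : point n) (j : 'I_n) : point n :=
  [ffun i => if i == j then ~~ x i else x i].

Definition protected n (f : dnf n) (y : point n) : {set 'I_n} :=
  [set i : 'I_n | [exists T in f, ~~ term_sat y T &&
     [exists b : bool, ((i, b) \in T) && ~~ lit_sat y (i, b)] &&
     [forall i' : 'I_n, [forall b' : bool,
        (((i', b') \in T) && ~~ lit_sat y (i', b')) ==> (i <= i')]]]].

(* Sweep process: z_0 = y, z_{i+1} = z_i^{(+)pi(i)} if f of it is 1, else z_i,
   for i < n (and constant afterwards; only z_0..z_n are meaningful). *)
Fixpoint sweep n (f : dnf n) (y : point n) (pi : 'S_n) (i : nat) : point n :=
  match i with
  | 0 => y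
  | i'.+1 =>
      let z := sweep f y pi i' in
      match insub i' : option 'I_n with
      | Some o => let z' := flip z (pi o) in if dnf_eval f z' then z' else z
      | None => z
      end
  end.

(* Main.v *)
Require Import Defs.
From mathcomp Require Import all_boot all_fingroup.

Theorem corollary4p5 (n k : nat) (f : dnf n) (y : point n) (pi : 'S_n)
    (i : nat) (T : term n) (j : 'I_n) :
  #|f| = k ->
  dnf_eval (dnf_gt f (1000 * k)) y ->
  ~~ dnf_eval (dnf_le f (1000 * k)) y ->
  i <= n ->
  (forall a : 'I_n, a \in protected f y -> sweep f y pi i a = y a) ->
  T \in sat_terms f (sweep f y pi i) ->
  sweep f y pi i j != y j ->
  (j, true) \notin T /\ (j, false) \notin T.
Proof.
move=> _ _ _ _; set z := sweep f y pi i => Hprot HT Hj.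
move: HT; rewrite inE => /andP [Tf /forallP Tz].
suff H : forall b, (j, b) \notin T by split; apply: H.
move=> b; apply/negP => jbT.
have zjb : z j == b by have := Tz (j, b); rewrite jbT.
have yjb : ~~ lit_sat y (j, b).
  rewrite /lit_sat /=; apply/negP => /eqP yj; move/eqP: zjb => zj.
  by move: Hj; rewrite zj yj eqxx.
pose P := fun a : 'I_n => [exists b' : bool, ((a, b') \in T) && ~~ lit_sat y (a, b')].
have Pj : P j by apply/existsP; exists b; rewrite jbT.
case: (arg_minnP (fun a : 'I_n => nat_of_ord a) Pj) => a Pa Hmin.
have aprot : a \in protected f y.
  rewrite inE; apply/existsP; exists T; rewrite Tf /=.
  apply/andP; split; first (apply/andP; split => //).
  - apply/negP => /forallP ysat.
    by move: Pa => /existsP [b' /andP [H1 H2]]; move: (ysat (a, b')); rewrite H1 (negbTE H2).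
  - apply/forallP => i'; apply/forallP => b'; apply/implyP => H.
    by apply: Hmin; apply/existsP; exists b'.
have za := Hprot a aprot.
move: Pa => /existsP [b' /andP [H1 H2]].
move: (Tz (a, b')); rewrite H1 /= /lit_sat /= za.
by move: H2; rewrite /lit_sat /= => /negbTE ->.
Qed.
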